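(* Let $(X,\kappa)$ be a finite digital image and $f:X\to X$ a continuous self-map with $L(f)\neq 0$. Then every continuous map $g:X\to X$ with $g\simeq^* f$ has a fixed point or at least two approximate fixed points.
   Context: A digital image is a pair $(X,\kappa)$ where $X$ is a set and $\kappa$ is a symmetric irreflexive relation on $X$ (the adjacency). Write $x\leftrightarrow y$ if adjacent, $x\Leftrightarrow y$ if adjacent or equal. A map $f$ is continuous if $x\leftrightarrow y$ implies $f(x)\Leftrightarrow f(y)$. A point $x$ is an approximate fixed point of $f:X\to X$ if $f(x)\Leftrightarrow x$. The digital interval $[0,m]_{\mathbb Z}$ has consecutive integers adjacent. Continuous $f,g:X\to Y$ are strongly homotopic ($f\simeq^* g$) if there exist $m\ge1$ and $H:X\times[0,m]_{\mathbb Z}\to Y$ with $H(\cdot,0)=f$, $H(\cdot,m)=g$, such that whenever $(x,t)\neq(x',t')$, $x\Leftrightarrow x'$ and $|t-t'|\le1$, we have $H(x,t)\Leftrightarrow H(x',t')$. Simplicial homology: a $q$-simplex of $X$ is a set of $q+1$ pairwise adjacent points. $C_q(X)$ is the free abelian group generated by ordered $q$-simplices $\langle x_0,\dots,x_q\rangle$ modulo $\langle x_{\rho(0)},\dots,x_{\rho(q)}\rangle=\operatorname{sgn}(\rho)\langle x_0,\dots,x_q\rangle$, with boundary $\partial\langle x_0,\dots,x_q\rangle=\sum_{i=0}^q(-1)^i\langle x_0,\dots,\widehat{x_i},\dots,x_q\rangle$; $H_q(X)$ is its homology. For continuous $f$, $f_q\langle p_0,\dots,p_q\rangle=\langle f(p_0),\dots,f(p_q)\rangle$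 (interpreted as $0$ if the image has fewer than $q+1$ points); this is a chain map inducing $f_{*,q}$ on $H_q$. The simplicial Lefschetz number of a self-map $f$ of a finite image is $L(f)=\sum_{q\ge0}(-1)^q\operatorname{tr}(f_{*,q})$, traces taken on $H_q(X)\otimes\mathbb Q$. *)

(* Defs.v *)
From HB Require Import structures.
From mathcomp Require Import all_boot all_order all_algebra.
Set Implicit Arguments. Unset Strict Implicit. Unset Printing Implicit Defensive.
Import Order.TTheory GRing.Theory Num.Theory.
Local Open Scope ring_scope.

Section DigitalImages.
Variables (X : finType) (k : rel X).

Definition adjeq (x y : X) : bool := (x == y) || k x y.

Definition dcontinuous (f : X -> X) : Prop :=
  forall x y, k x y -> adjeq (f x) (f y).

Definition approx_fixed (f : X -> X) (x : X) : Prop := adjeq (f x) x.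

Definition strongly_homotopic (f g : X -> X) : Prop :=
  exists (m : nat) (H : X -> nat -> X),
    (1 <= m)%N /\ (forall x, H x 0%N = f x) /\ (forall x, H x m = g x) /\
    forall x x' t t', (t <= m)%N -> (t' <= m)%N -> (x, t) <> (x', t') ->
      adjeq x x' -> (t <= t'.+1)%N -> (t' <= t.+1)%N -> adjeq (H x t) (H x' t').

(** unoriented q-simplices: sets of q+1 pairwise adjacent points.
    Each simplex A is oriented by listing its points in the enumeration
    order of X, i.e. as the ordered simplex <enum A>. *)
Definition simp (q : nat) : {set {set X}} :=
  [set A : {set X} | (#|A| == q.+1) &&
     [forall x in A, forall y in A, (x != y) ==> k x y]].

Definition simpl_of q (i : 'I_#|simp q|) : {set X} := enum_val i.

Fixpoint inversions (s : seq X) : nat :=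
  match s with
  | [::] => 0%N
  | x :: t => (count (fun y => enum_rank y < enum_rank x)%N t + inversions t)%N
  end.

(** Boundary matrix from C_{q+1} to C_q (chains are row vectors, with
    coordinates in the oriented basis above):
    the face of <a_0,...,a_{q+1}> omitting a_i has coefficient (-1)^i. *)
Definition bdmx (q : nat) : 'M[rat]_(#|simp q.+1|, #|simp q|) :=
  \matrix_(i, j)
    let A := simpl_of i in let B := simpl_of j in
    if B \subset A then (-1) ^+ (find (fun y => y \notin B) (enum A)) else 0.

(** Matrix of the chain map f_q on C_q:
    f_q <a_0..a_q> = <f a_0 .. f a_q>, which is 0 if two images coincide,
    and otherwise equals sgn(sorting permutation) * <enum (f @: A)>. *)
Definition chainmx (f : X -> X) (q : nat) : 'M[rat]_(#|simp q|) :=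
  \matrix_(i, j)
    let A := simpl_of i in let B := simpl_of j in
    if (f @: A == B) && (#|f @: A| == q.+1)
    then (-1) ^+ (inversions (map f (enum A))) else 0.

Definition cyclesmx (q : nat) : 'M[rat]_(#|simp q|) :=
  match q return 'M[rat]_(#|simp q|) with
  | 0%N => 1%:M
  | q'.+1 => kermx (bdmx q')
  end.

Definition boundmx (q : nat) : 'M[rat]_(#|simp q|) := <<bdmx q>>%MS.

(** A basis of a complement of B_q in Z_q; its span is identified with
    H_q(X) (x) Q = Z_q / B_q. *)
Definition hbasis (q : nat) := row_base (cyclesmx q :\: boundmx q)%MS.

(** Matrix of the induced map f_{*,q} on H_q(X) (x) Q in the basis hbasis:
    image of a basis vector, projected onto the complement along B_q,
    then expressed in coordinates. *)
Definition homology_mx (f : X -> X) (q : nat) :=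
  hbasis q *m chainmx f q *m proj_mx (cyclesmx q :\: boundmx q)%MS (boundmx q)
    *m pinvmx (hbasis q).

(** Simplicial Lefschetz number; simplices have dimension < #|X|. *)
Definition lefschetz (f : X -> X) : rat :=
  \sum_(q < #|X|) (-1) ^+ q * \tr (homology_mx f q).

End DigitalImages.

(* Main.v *)
Require Import Defs.
From HB Require Import structures.
From mathcomp Require Import all_boot all_order all_algebra.
From mathcomp Require Import ring lra.
Set Implicit Arguments. Unset Strict Implicit. Unset Printing Implicit Defensive.
Import Order.TTheory GRing.Theory Num.Theory.
Local Open Scope ring_scope.

Section Comb.
Variables (X : finType).

Definition rk (x : X) : nat := enum_rank x.
Definition sg (b : bool) : rat := if b then -1 else 1.
Definition rho (A : {set X}) (a : X) := \prod_(y in A) sg (rk y < rk a)%N.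
Definition sigma (f : X -> X) (A : {set X}) :=
  \prod_(u in A) \prod_(v in A) sg ((rk u < rk v) && (rk (f v) < rk (f u)))%N.

Lemma pw_enumX : pairwise (fun x y : X => rk x < rk y)%N (enum X).
Proof.
case e : (enum X) => [|x0 s] //; rewrite -e.
apply/(pairwiseP x0) => i j; rewrite !inE -cardE => hi hj hij.
suff H : forall (l : nat), (l < #|X|)%N -> rk (nth x0 (enum X) l) = l.
  by rewrite !H.
move=> l hl; pose o := Ordinal hl.
have -> : l = o by [].
have := nth_enum_rank x0 (enum_val o); rewrite enum_valK => ->.
by rewrite /rk enum_valK.
Qed.

Lemma pw_enum (A : {set X}) : pairwise (fun x y : X => rk x < rk y)%N (enum A).
Proof. rewrite /enum_mem -enumT; exact: pairwise_filter pw_enumX. Qed.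

Lemma sg_exp (b : bool) : (-1) ^+ b = sg b. Proof. by case: b. Qed.

Lemma exp_sum (s : seq X) (g : X -> nat) :
  (-1) ^+ (\sum_(u <- s) g u) = \prod_(u <- s) ((-1) ^+ g u : rat).
Proof. by elim: s => [|x s IH]; rewrite ?big_nil ?big_cons ?expr0 // exprD IH. Qed.

Lemma count_sum (P : pred X) s : count P s = (\sum_(y <- s) P y)%N.
Proof. by elim: s => [|x s IH]; rewrite ?big_nil ?big_cons //= IH. Qed.

Lemma index_count s a : pairwise (fun x y : X => rk x < rk y)%N s -> a \in s ->
  index a s = count (fun y => rk y < rk a)%N s.
Proof.
elim: s => [|x s IH] //= /andP[/allP hx hs]; rewrite inE.
case: eqP => [-> _|/eqP hxa /= ha].
  rewrite ltnn add0n eqxx; apply/esym/eqP; rewrite eqn0Ngt -has_count.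
  by apply/hasP => -[y /hx h1 h2]; have := ltn_trans h1 h2; rewrite ltnn.
by rewrite eq_sym (negbTE hxa) IH // (hx a ha).
Qed.

Lemma bd_sign (A : {set X}) a : a \in A ->
  (-1) ^+ find (fun y => y \notin A :\ a) (enum A) = rho A a.
Proof.
move=> aA.
have -> : find (fun y => y \notin A :\ a) (enum A) = index a (enum A).
  apply: eq_in_find => y; rewrite mem_enum !inE => yA /=.
  by rewrite yA andbT negbK eq_sym.
rewrite index_count ?pw_enum ?mem_enum // count_sum exp_sum /rho -big_enum /=.
by apply: eq_bigr => y _; rewrite sg_exp.
Qed.

Lemma inv_sum (f : X -> X) s : pairwise (fun x y : X => rk x < rk y)%N s ->
  inversions (map f s) =
  (\sum_(u <- s) \sum_(v <- s) ((rk u < rk v) && (rk (f v) < rk (f u)) : nat))%N.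
Proof.
elim: s => [|x s IH]; first by rewrite big_nil.
rewrite /= => /andP[/allP hx hs]; rewrite IH // big_cons big_cons ltnn /= add0n.
congr (_ + _)%N.
  rewrite count_map count_sum; apply: eq_big_seq => v /hx ->; by [].
apply: eq_big_seq => u /hx h; rewrite big_cons ltnNge (ltnW h) /=; by [].
Qed.

Lemma ch_sign (f : X -> X) (A : {set X}) :
  (-1) ^+ inversions (map f (enum A)) = sigma f A.
Proof.
rewrite inv_sum ?pw_enum // exp_sum /sigma -big_enum /=; apply: eq_bigr => u _.
rewrite exp_sum -big_enum /=; apply: eq_bigr => v _; by rewrite sg_exp.
Qed.

End Comb.
Arguments sg : simpl never.

Section S.
Variables (X : finType).
Implicit Types (A B C : {set X}).

Lemma prodD1 (F : X -> rat) A a : a \in A ->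
  \prod_(y in A) F y = F a * \prod_(y in A :\ a) F y.
Proof. move=> aA; rewrite (bigD1 a) //=; congr (_ * _); apply: eq_bigl => y; by rewrite !inE andbC. Qed.

Lemma sgF : sg false = 1. Proof. by []. Qed.
Lemma sgT : sg true = -1. Proof. by []. Qed.
Lemma sg2 b : sg b * sg b = 1. Proof. by case: b; rewrite /sg ?mulr1 ?mulrNN ?mulr1. Qed.

Lemma rk_inj : injective (@rk X).
Proof. by move=> x y /val_inj /enum_rank_inj. Qed.

Lemma rk_neq (x y : X) : x != y -> (rk x != rk y)%N.
Proof. by apply: contra => /eqP /rk_inj ->. Qed.

Lemma missing C A : C \subset A -> #|A| = (#|C|).+1 -> exists2 c, c \in A & C = A :\ c.
Proof.
move=> sCA hA.
have : #|A :\: C| == 1%N.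
  by rewrite cardsD (setIidPr sCA) hA subSnn.
case/cards1P => c hc.
have cAC : c \in A :\: C by rewrite hc set11.
exists c; first by move: cAC; rewrite inE => /andP[].
apply/setP => x; rewrite !inE.
case xC : (x \in C).
  rewrite (subsetP sCA _ xC) andbT; apply/esym/eqP => exc; move: cAC; by rewrite -exc inE xC.
case xA : (x \in A); rewrite ?andbF ?andbT //.
have : x \in A :\: C by rewrite inE xC xA.
by rewrite hc inE => ->.
Qed.

Lemma sigmaD1 (f : X -> X) A a : a \in A ->
  sigma f A = sigma f (A :\ a) *
   \prod_(y in A :\ a) (sg ((rk a < rk y) && (rk (f y) < rk (f a)))%N *
                        sg ((rk y < rk a) && (rk (f a) < rk (f y)))%N).
Proof.
move=> aA; rewrite /sigma (prodD1 _ aA) (prodD1 _ aA) ltnn /= sgF mul1r.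
rewrite [X in _ * X = _](eq_bigr (fun u => sg ((rk u < rk a) && (rk (f a) < rk (f u)))%N *
   \prod_(v in A :\ a) sg ((rk u < rk v) && (rk (f v) < rk (f u)))%N)); last first.
  by move=> u _; rewrite (prodD1 _ aA).
rewrite big_split /= big_split /=; ring.
Qed.


Lemma sgS1 (y a fy fa : nat) : (y != a)%N -> (fy != fa)%N ->
  sg (y < a)%N = sg ((a < y) && (fy < fa))%N * sg ((y < a) && (fa < fy))%N * sg (fy < fa)%N.
Proof.
move=> h1 h2; case: (ltngtP y a) h1 => // _ _; case: (ltngtP fy fa) h2 => // _ _;
  rewrite /sg /=; ring.
Qed.

Lemma sgS2 (y a a' fy v : nat) : (y != a)%N -> (y != a')%N -> (fy != v)%N ->
  sg (y < a)%N * (sg ((a' < y) && (fy < v))%N * sg ((y < a') && (v < fy))%N) =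
  sg (y < a')%N * (sg ((a < y) && (fy < v))%N * sg ((y < a) && (v < fy))%N).
Proof.
move=> h1 h2 h3; case: (ltngtP y a) h1 => // _ _; case: (ltngtP y a') h2 => // _ _;
  case: (ltngtP fy v) h3 => // _ _; rewrite /sg /=; ring.
Qed.

Lemma rhoD1 A a : a \in A -> rho A a = \prod_(y in A :\ a) sg (rk y < rk a)%N.
Proof. by move=> aA; rewrite /rho (prodD1 _ aA) ltnn sgF mul1r. Qed.

Lemma rho_img (f : X -> X) A a : a \in A -> {in A &, injective f} ->
  rho (f @: A) (f a) = \prod_(y in A :\ a) sg (rk (f y) < rk (f a))%N.
Proof.
move=> aA injf; rewrite /rho big_imset //= (prodD1 _ aA) ltnn sgF mul1r //.
Qed.

Lemma S1 (f : X -> X) A a : a \in A -> {in A &, injective f} ->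
  rho A a * sigma f (A :\ a) = sigma f A * rho (f @: A) (f a).
Proof.
move=> aA injf.
rewrite (sigmaD1 f aA) rhoD1 // rho_img //.
move: (sigma f (A :\ a)) => S; rewrite -mulrA -big_split /= mulrC; congr (_ * _); apply: eq_bigr => y.
rewrite !inE => /andP[ya yA]; rewrite (@sgS1 _ _ (rk (f y)) (rk (f a))) ?rk_neq //.
apply: contra ya => /eqP /injf -> //.
Qed.

Lemma sg_anti (x y : X) : x != y -> sg (rk x < rk y)%N = - sg (rk y < rk x)%N.
Proof.
move/rk_neq; case: (ltngtP (rk x) (rk y)) => // _ _; rewrite /sg; ring.
Qed.

Lemma DD A a b : a \in A -> b \in A -> a != b ->
  rho A a * rho (A :\ a) b + rho A b * rho (A :\ b) a = 0.
Proof.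
move=> aA bA ab.
have bAa : b \in A :\ a by rewrite !inE eq_sym ab.
have aAb : a \in A :\ b by rewrite !inE ab.
rewrite {1}/rho (prodD1 _ bA) [X in _ + X * _]/rho (prodD1 _ aA) -/(rho (A :\ b) a)
  -/(rho (A :\ a) b) (sg_anti ab); ring.
Qed.

Lemma setDC A (a b : X) : A :\ a :\ b = A :\ b :\ a.
Proof. by apply/setP => y; rewrite !inE andbCA. Qed.

Lemma S2 (f : X -> X) A a a' : a \in A -> a' \in A -> a != a' -> f a = f a' ->
  {in A :\ a &, injective f} ->
  rho A a * sigma f (A :\ a) + rho A a' * sigma f (A :\ a') = 0.
Proof.
move=> aA a'A aa' fe injf.
have a'Aa : a' \in A :\ a by rewrite !inE eq_sym aa'.
have aAa' : a \in A :\ a' by rewrite !inE aa'.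
rewrite (sigmaD1 f a'Aa) (sigmaD1 f aAa') (rhoD1 aA) (rhoD1 a'A).
rewrite (prodD1 _ a'Aa) (prodD1 _ aAa') [A :\ a' :\ a]setDC -fe.
move: (sigma f (A :\ a :\ a')) => s2.
set A2 := A :\ a :\ a'.
have eP : \prod_(y in A2) sg (rk y < rk a)%N *
   \prod_(y in A2) (sg ((rk a' < rk y) && (rk (f y) < rk (f a)))%N *
                    sg ((rk y < rk a') && (rk (f a) < rk (f y)))%N) =
   \prod_(y in A2) sg (rk y < rk a')%N *
   \prod_(y in A2) (sg ((rk a < rk y) && (rk (f y) < rk (f a)))%N *
                    sg ((rk y < rk a) && (rk (f a) < rk (f y)))%N).
  rewrite -!big_split /=; apply: eq_bigr => y; rewrite !inE => /and3P[ya' ya yA].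
  apply: sgS2; rewrite ?rk_neq //.
  rewrite fe; apply: contra ya' => /eqP /injf -> //; rewrite !inE ?ya ?yA //.
move: eP; rewrite (sg_anti aa').
move: (\prod_(y in A2) sg (rk y < rk a)%N) => P1.
move: (\prod_(y in A2) sg (rk y < rk a')%N) => P2.
move: (\prod_(y in A2) (sg ((rk a' < rk y) && (rk (f y) < rk (f a)))%N *
                    sg ((rk y < rk a') && (rk (f a) < rk (f y)))%N)) => Q1.
move: (\prod_(y in A2) (sg ((rk a < rk y) && (rk (f y) < rk (f a)))%N *
                    sg ((rk y < rk a) && (rk (f a) < rk (f y)))%N)) => Q2.
move=> eP.
have -> : sg (rk a' < rk a)%N * P1 * (s2 * Q1) = sg (rk a' < rk a)%N * s2 * (P1 * Q1) by ring.
rewrite eP; ring.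
Qed.

End S.

Section M.
Variables (X : finType) (k : rel X).
Implicit Types (A B C : {set X}).

Definition bd_e A B : rat :=
  if B \subset A then (-1) ^+ find (fun y => y \notin B) (enum A) else 0.

Lemma bdmxE q i j : bdmx k q i j = bd_e (simpl_of i) (simpl_of j).
Proof. by rewrite mxE. Qed.

Lemma bd_eD1 A a : a \in A -> bd_e A (A :\ a) = rho A a.
Proof. by move=> aA; rewrite /bd_e subsetDl bd_sign. Qed.

Lemma simpE q A : (A \in simp k q) =
  (#|A| == q.+1) && [forall x in A, forall y in A, (x != y) ==> k x y].
Proof. by rewrite inE. Qed.

Lemma cliqueP A : reflect (forall x y, x \in A -> y \in A -> x != y -> k x y)
  [forall x in A, forall y in A, (x != y) ==> k x y].
Proof.
apply: (iffP forallP) => [h x y xA yA xy|h x].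
  by have := h x; rewrite xA /= => /forallP /(_ y); rewrite yA xy.
by apply/implyP => xA; apply/forallP => y; apply/implyP => yA; apply/implyP; apply: h.
Qed.

Lemma simpD1 q A a : A \in simp k q.+1 -> a \in A -> A :\ a \in simp k q.
Proof.
rewrite !simpE => /andP[/eqP hA /cliqueP hc] aA; apply/andP; split.
  by move: hA; rewrite (cardsD1 a) aA add1n => -[->].
apply/cliqueP => x y; rewrite !inE => /andP[_ xA] /andP[_ yA]; exact: hc.
Qed.

Lemma simp_card q A : A \in simp k q -> #|A| = q.+1.
Proof. by rewrite simpE => /andP[/eqP]. Qed.

Lemma bd_row q (i : 'I_#|simp k q.+1|) (G : {set X} -> rat) :
  \sum_(j < #|simp k q|) bdmx k q i j * G (simpl_of j) =
  \sum_(a in simpl_of i) rho (simpl_of i) a * G (simpl_of i :\ a).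
Proof.
set A := simpl_of i.
have hA : A \in simp k q.+1 := enum_valP i.
rewrite (eq_bigr (fun j => bd_e A (simpl_of j) * G (simpl_of j))); last by move=> j _; rewrite bdmxE.
rewrite [LHS](_ : _ = \sum_(B in simp k q) bd_e A B * G B); last by rewrite [RHS]big_enum_val.
rewrite (big_setID [set A :\ a | a in A]) /=.
rewrite [X in _ + X]big1 ?addr0; last first.
  move=> B /setDP[hB hn]; rewrite /bd_e; case: ifP => sBA; last by rewrite mul0r.
  have [c cA eB] := missing sBA (etrans (simp_card hA) (congr1 S (esym (simp_card hB)))).
  by move: hn; rewrite eB (imset_f (fun a => A :\ a) cA).
rewrite (setIidPr _); last first.
  by apply/subsetP => B /imsetP[a aA ->]; apply: simpD1.
rewrite big_imset /=; last first.
  move=> a b aA bA e; apply/eqP; apply: contraT => ab.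
  have : a \in A :\ b by rewrite !inE ab.
  by rewrite -e !inE eqxx.
by apply: eq_bigr => a aA; rewrite bd_eD1.
Qed.


Lemma bd_e0 A B : ~~ (B \subset A) -> bd_e A B = 0.
Proof. by rewrite /bd_e => /negbTE ->. Qed.

Lemma dd_set q A C : A \in simp k q.+2 -> C \in simp k q ->
  \sum_(a in A) rho A a * bd_e (A :\ a) C = 0.
Proof.
move=> hA hC.
case sCA : (C \subset A); last first.
  apply: big1 => a aA; rewrite bd_e0 ?mulr0 //; apply: contraFN sCA => h.
  exact: subset_trans h (subsetDl _ _).
have : (0 < #|A :\: C|)%N by rewrite cardsD (setIidPr sCA) (simp_card hA) (simp_card hC) subSn.
rewrite card_gt0 => /set0Pn [a /setDP [aA aC]].
have sCAa : C \subset A :\ a.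
  apply/subsetP => x xC; rewrite !inE (subsetP sCA _ xC) andbT.
  by apply: contraNneq aC => <-.
have [b bAa eC] : exists2 b, b \in A :\ a & C = A :\ a :\ b.
  apply: missing sCAa _.
  rewrite (simp_card hC); have := cardsD1 a A.
  by rewrite aA (simp_card hA) add1n => -[<-].
have bA : b \in A by move: bAa; rewrite !inE => /andP[_ ->].
have ba : b != a by move: bAa; rewrite !inE => /andP[-> _].
rewrite (bigD1 a) //= (bigD1 b) /=; last by rewrite bA ba.
rewrite big1 ?addr0; last first.
  move=> y /andP[/andP[yA ya] yb]; rewrite bd_e0 ?mulr0 //.
  apply/negP => /subsetP /(_ y); rewrite eC !inE yb ya yA eqxx /=.
  by move/(_ isT).
rewrite eC bd_eD1 // setDC bd_eD1; last by rewrite !inE eq_sym ba.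
by rewrite (DD aA bA) // eq_sym.
Qed.

Lemma dd_mx q : bdmx k q.+1 *m bdmx k q = 0.
Proof.
apply/matrixP => i l; rewrite !mxE.
rewrite (eq_bigr (fun j => bdmx k q.+1 i j * bd_e (simpl_of j) (simpl_of l))); last first.
  by move=> j _; rewrite (bdmxE j l).
rewrite (bd_row i (fun B => bd_e B (simpl_of l))); apply: dd_set; exact: enum_valP.
Qed.


Section Chain.
Variable (f : X -> X).
Hypothesis hf : dcontinuous k f.

Definition ch_e q A B : rat :=
  if (f @: A == B) && (#|f @: A| == q.+1) then sigma f A else 0.

Lemma chmxE q i j : chainmx k f q i j = ch_e q (simpl_of i) (simpl_of j).
Proof. by rewrite mxE /= ch_sign. Qed.

Lemma img_simp q A : A \in simp k q -> #|f @: A| == q.+1 -> f @: A \in simp k q.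
Proof.
move=> hA hc; rewrite simpE hc /=; apply/cliqueP => x y /imsetP[u uA ->] /imsetP[v vA ->] ne.
have uv : u != v by apply: contraNneq ne => ->.
move: hA; rewrite simpE => /andP[_ /cliqueP hc'].
have := hf (hc' u v uA vA uv); rewrite /adjeq; by rewrite (negbTE ne).
Qed.

Lemma imsetD1_inj A a : a \in A -> {in A &, injective f} -> f @: (A :\ a) = f @: A :\ f a.
Proof.
move=> aA injf; apply/setP => z; rewrite !inE; apply/imsetP/andP.
  case=> y; rewrite !inE => /andP[ya yA] ->; split; last exact: imset_f.
  by apply: contra ya => /eqP /injf -> .
case=> za /imsetP [y yA ez]; exists y => //; rewrite !inE yA andbT.
by apply: contraNneq za => ya; rewrite ez ya.
Qed.

Lemma imset_absorb A a : a \in A -> f a \in f @: (A :\ a) -> f @: (A :\ a) = f @: A.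
Proof.
move=> aA h; rewrite -{2}(setD1K aA) imsetU1; apply/esym/setUidPr; by rewrite sub1set.
Qed.

Lemma chain_set q A C : A \in simp k q.+1 -> C \in simp k q ->
  \sum_(a in A) rho A a * ch_e q (A :\ a) C =
  (if #|f @: A| == q.+2 then sigma f A * bd_e (f @: A) C else 0).
Proof.
move=> hA hC; have cA := simp_card hA.
case: ifP => hinj.
  have injf : {in A &, injective f} by apply/imset_injP; rewrite cA.
  case sC : (C \subset f @: A); last first.
    rewrite bd_e0 ?sC // mulr0; apply: big1 => a aA; rewrite /ch_e.
    case: eqP; rewrite ?mulr0 // => e; move: sC; by rewrite -e imsetS // subsetDl.
  have [c cfA eC] := missing sC (etrans (eqP hinj) (congr1 S (esym (simp_card hC)))).
  case/imsetP: cfA => a0 a0A ec; subst c.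
  rewrite (bigD1 a0) //= big1 ?addr0; last first.
    move=> a /andP[aA aa0]; rewrite /ch_e imsetD1_inj // eC.
    case: eqP; rewrite ?mulr0 // => e.
    have : f a0 \in f @: A :\ f a by rewrite !inE imset_f // andbT; apply: contra aa0 => /eqP /injf ->.
    by rewrite e !inE eqxx.
  rewrite /ch_e imsetD1_inj // -eC eqxx /=.
  have -> : #|C| == q.+1 by rewrite (simp_card hC).
  by rewrite eC bd_eD1 ?imset_f // S1.
case: (pickP (fun a => [&& a \in A, f @: (A :\ a) == C & #|f @: (A :\ a)| == q.+1]))
  => [a /and3P[aA /eqP e1 e2] | none]; last first.
  apply: big1 => a aA; rewrite /ch_e; have := none a; rewrite aA /= => ->; by rewrite mulr0.
have cAa : #|A :\ a| = q.+1 by have := cardsD1 a A; rewrite aA cA add1n => -[].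
have injA : {in A :\ a &, injective f} by apply/imset_injP; rewrite cAa.
have : f a \in f @: (A :\ a).
  apply: contraFT hinj => h.
  by rewrite -(setD1K aA) imsetU1 cardsU1 h (eqP e2).
case/imsetP => a' a'Aa fe.
have a'A : a' \in A by move: a'Aa; rewrite !inE => /andP[_ ->].
have aa' : a != a' by move: a'Aa; rewrite !inE eq_sym => /andP[-> _].
have aAa' : a \in A :\ a' by rewrite !inE aa'.
have ea : f @: (A :\ a) = f @: A by apply: imset_absorb => //; rewrite fe imset_f.
have ea' : f @: (A :\ a') = f @: A by apply: imset_absorb => //; rewrite -fe imset_f.
rewrite (bigD1 a) //= (bigD1 a') /=; last by rewrite a'A eq_sym.
rewrite big1 ?addr0; last first.
  move=> y /andP[/andP[yA ya] ya']; rewrite /ch_e.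
  have : #|f @: (A :\ y)| != q.+1.
    have cAy : #|A :\ y| = q.+1 by have := cardsD1 y A; rewrite yA cA add1n => -[].
    rewrite -cAy; apply/imset_injP => inj.
    have : a = a' by apply: inj => //; rewrite !inE ?aA ?a'A andbT // eq_sym.
    by move/eqP; rewrite (negbTE aa').
  by move/negbTE => ->; rewrite andbF mulr0.
rewrite /ch_e ea' -ea e2 e1 eqxx /=.
exact: (S2 aA a'A aa' fe injA).
Qed.


Lemma cm_mx q : chainmx k f q.+1 *m bdmx k q = bdmx k q *m chainmx k f q.
Proof.
apply/matrixP => i l; rewrite !mxE.
rewrite [RHS](eq_bigr (fun j => bdmx k q i j * ch_e q (simpl_of j) (simpl_of l))); last first.
  by move=> j _; rewrite (chmxE j l).
rewrite (bd_row i (fun B => ch_e q B (simpl_of l))) chain_set; try exact: enum_valP.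
set A := simpl_of i; set C := simpl_of l.
rewrite (eq_bigr (fun j => ch_e q.+1 A (simpl_of j) * bd_e (simpl_of j) C)); last first.
  by move=> j _; rewrite (chmxE i j) (bdmxE j l).
rewrite (_ : \sum_(j < _) _ = \sum_(B in simp k q.+1) ch_e q.+1 A B * bd_e B C); last first.
  by rewrite [RHS]big_enum_val.
case: ifP => hc; last first.
  by apply: big1 => B _; rewrite /ch_e hc andbF mul0r.
rewrite (bigD1 (f @: A)) /=; last by apply: img_simp => //; exact: enum_valP.
rewrite big1 ?addr0; last first.
  by move=> B /andP[_ nB]; rewrite /ch_e eq_sym (negbTE nB) mul0r.
by rewrite /ch_e eqxx hc.
Qed.

End Chain.
End M.

Section LA.
Variables (X : finType) (k : rel X) (f : X -> X).
Hypothesis dd : forall q, bdmx k q.+1 *m bdmx k q = 0.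
Hypothesis cm : forall q, chainmx k f q.+1 *m bdmx k q = bdmx k q *m chainmx k f q.

Local Notation D := (bdmx k).
Local Notation F := (chainmx k f).
Local Notation Z := (cyclesmx k).
Local Notation B := (boundmx k).
Local Notation W q := (Z q :\: B q)%MS.
Local Notation EB q := (proj_mx (B q) (W q)).
Local Notation EH q := (proj_mx (W q) (B q)).

Lemma BZ q : (B q <= Z q)%MS.
Proof.
case: q => [|q]; first exact: submx1.
by rewrite /boundmx genmxE /= sub_kermx dd.
Qed.

Lemma WB0 q : (W q :&: B q = 0)%MS.
Proof. exact: capmx_diff. Qed.

Lemma BW0 q : (B q :&: W q = 0)%MS.
Proof. by rewrite capmxC WB0. Qed.

Lemma Zsum q : (Z q <= B q + W q)%MS.
Proof.
rewrite addsmxC; apply: submx_trans (addsmxS (submx_refl _) (capmxSr (Z q) (B q))).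
by rewrite addsmx_diff_cap_eq.
Qed.

Lemma trH q : \tr (homology_mx k f q) = \tr (F q *m EH q).
Proof.
rewrite /homology_mx; set P := proj_mx _ _; set h := hbasis k q.
have hs : (P <= h)%MS.
  have := proj_mx_sub (W q) (B q) 1%:M; rewrite mul1mx.
  by rewrite /h /hbasis eq_row_base.
clearbody P h.
rewrite -!mulmxA (mxtrace_mulC h) -mulmxA (mulmxKpV hs) //.
Qed.

Lemma EBD q : EB q.+1 *m F q.+1 *m D q = 0.
Proof.
rewrite -mulmxA cm mulmxA.
have := proj_mx_sub (B q.+1) (W q.+1) 1%:M; rewrite mul1mx /boundmx genmxE.
by case/submxP => M ->; rewrite -(mulmxA M) dd mulmx0 mul0mx.
Qed.

Lemma EHD q : EH q.+1 *m F q.+1 *m D q = 0.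
Proof.
rewrite -mulmxA cm mulmxA.
have := proj_mx_sub (W q.+1) (B q.+1) 1%:M; rewrite mul1mx => h.
have : (EH q.+1 <= Z q.+1)%MS by apply: submx_trans h (diffmxSl _ _).
by rewrite /= sub_kermx => /eqP ->; rewrite mul0mx.
Qed.

Definition EK q := D q *m EB q *m pinvmx (D q).

Lemma EBsub q : (EB q <= D q)%MS.
Proof.
have := proj_mx_sub (B q) (W q) 1%:M; rewrite mul1mx.
by rewrite /boundmx genmxE.
Qed.

Lemma EBid q : D q *m EB q = D q.
Proof. by rewrite proj_mx_id ?BW0 // /boundmx genmxE. Qed.

Lemma EKD q : EK q *m D q = D q.
Proof.
rewrite /EK; move: (mulmxKpV (EBsub q)) (EBid q).
generalize (EB q) => E h1 h2.
have -> : D q *m E *m pinvmx (D q) *m D q = D q *m (E *m pinvmx (D q) *m D q).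
  by rewrite !mulmxA.
by rewrite h1 h2.
Qed.

Lemma uZ q : (1 - EK q <= Z q.+1)%MS.
Proof. by rewrite /= sub_kermx mulmxBl mul1mx EKD subrr. Qed.

Lemma abs_tr n m (Fq : 'M[rat]_m) (Fs : 'M[rat]_n) (Dm : 'M[rat]_(n,m))
  (EBq : 'M[rat]_m) (EBs EHs : 'M[rat]_n) (R : 'M[rat]_(m,n)) :
  Fs *m Dm = Dm *m Fq -> EBq *m R *m Dm = EBq -> EBs *m Fs *m Dm = 0 ->
  EHs *m Fs *m Dm = 0 ->
  (1 - Dm *m EBq *m R) *m EBs + (1 - Dm *m EBq *m R) *m EHs = 1 - Dm *m EBq *m R ->
  \tr Fs = \tr (Fq *m EBq) + \tr (Fs *m EBs) + \tr (Fs *m EHs).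
Proof.
move=> cm1 hK hB hH e1.
have -> : \tr Fs = \tr (Fs *m (Dm *m EBq *m R) + Fs *m ((1 - Dm *m EBq *m R) *m EBs)
   + Fs *m ((1 - Dm *m EBq *m R) *m EHs)).
  by rewrite -addrA -mulmxDr e1 -mulmxDr addrC subrK mulmx1.
rewrite !mxtraceD; congr (_ + _ + _).
- rewrite !mulmxA cm1 -!mulmxA mxtrace_mulC -!mulmxA.
  by rewrite (mulmxA EBq) hK.
- rewrite mulmxBl mul1mx mulmxBr linearB /= mulmxA (mxtrace_mulC (Fs *m (Dm *m EBq *m R)) EBs).
  by rewrite !mulmxA hB !mul0mx linear0 subr0.
- rewrite mulmxBl mul1mx mulmxBr linearB /= mulmxA (mxtrace_mulC (Fs *m (Dm *m EBq *m R)) EHs).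
  by rewrite !mulmxA hH !mul0mx linear0 subr0.
Qed.

Lemma trF_succ q : \tr (F q.+1) =
  \tr (F q *m EB q) + \tr (F q.+1 *m EB q.+1) + \tr (F q.+1 *m EH q.+1).
Proof.
apply: abs_tr (cm q) (mulmxKpV (EBsub q)) (EBD q) (EHD q) _.
apply: add_proj_mx; first exact: BW0.
exact: submx_trans (uZ q) (Zsum _).
Qed.

Lemma trF_0 : \tr (F 0) = \tr (F 0 *m EB 0) + \tr (F 0 *m EH 0).
Proof.
rewrite -mxtraceD -mulmxDr.
have := add_proj_mx (BW0 0) (Zsum 0).
by rewrite /= !mul1mx => ->; rewrite mulmx1.
Qed.

Lemma simp_big q : (#|X| <= q)%N -> #|simp k q| = 0%N.
Proof.
move=> hq; apply/eqP; rewrite cards_eq0; apply/eqP/setP => A; rewrite !inE.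
apply/negbTE; apply/negP => /andP[/eqP hA _].
by have := max_card A; rewrite hA ltnNge hq.
Qed.

Lemma EB_top q : (#|X| <= q.+1)%N -> EB q = 0.
Proof.
move=> hq.
have hD : D q = 0.
  apply/matrixP => i j; exfalso; have := ltn_ord i; move: (nat_of_ord i) => x; by rewrite simp_big.
have := proj_mx_sub (B q) (W q) 1%:M; rewrite mul1mx /boundmx hD genmx0 submx0.
by move/eqP.
Qed.

Lemma lef_zero (hN : forall q, \tr (F q) = 0) : lefschetz k f = 0.
Proof.
pose b q := \tr (F q *m EB q).
have h0 : \tr (homology_mx k f 0) = - b 0.
  have e := trF_0; rewrite hN in e; rewrite trH /b; lra.
have hS q : \tr (homology_mx k f q.+1) = - b q - b q.+1.
  have e := trF_succ q; rewrite hN in e; rewrite trH /b; lra.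
have tel n : \sum_(q < n.+1) (-1) ^+ q * \tr (homology_mx k f q) = (-1) ^+ n.+1 * b n.
  elim: n => [|n IH]; first by rewrite big_ord1 h0 /=; ring.
  rewrite big_ord_recr /= IH hS !exprS; ring.
rewrite /lefschetz; case hX : #|X| => [|n]; first by rewrite big_ord0.
by rewrite tel /b EB_top ?hX // mulmx0 linear0 mulr0.
Qed.

End LA.

Lemma tr_zero (X : finType) (k : rel X) (f : X -> X)
  (hN : forall x, ~~ adjeq k (f x) x) q : \tr (chainmx k f q) = 0.
Proof.
rewrite /mxtrace; apply: big1 => i _; rewrite chmxE /ch_e.
set A := simpl_of i; have hA : A \in simp k q := enum_valP i.
case: eqP => //= e.
have : (0 < #|A|)%N by rewrite (simp_card hA).
rewrite card_gt0 => /set0Pn [x xA].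
have fxA : f x \in A by rewrite -e imset_f.
move: hA; rewrite simpE => /andP[_ /cliqueP hc].
have := hN x; rewrite /adjeq; case: eqP => //= ne.
by rewrite hc //; apply/eqP.
Qed.

Theorem corollary3p5 (X : finType) (k : rel X)
    (k_sym : symmetric k) (k_irr : irreflexive k)
    (f : X -> X) (hf : dcontinuous k f) (hL : lefschetz k f != 0)
    (g : X -> X) (hg : dcontinuous k g) (hgf : strongly_homotopic k g f) :
  (exists x, g x = x) \/
  (exists x y, x != y /\ approx_fixed k g x /\ approx_fixed k g y).
Proof.
case: (boolP [exists x, adjeq k (g x) x]) => [/existsP [x hx] | hno].
  case: (eqVneq (g x) x) => [e | ne]; first by left; exists x.
  right; exists x, (g x); split; first by rewrite eq_sym.
  split => //; rewrite /approx_fixed.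
  have kx : k (g x) x by move: hx; rewrite /adjeq (negbTE ne).
  exact: hg kx.
exfalso; move/eqP: hL; apply.
case: hgf => m [H [hm [h0 [hm' hH]]]].
have hall t : (t <= m)%N -> forall x, ~~ adjeq k (H x t) x.
  elim: t => [_ x|t IH ht x]; first by rewrite h0; move/existsPn: hno.
  apply/negP => hx.
  have := hH (H x t.+1) x t t.+1 (ltnW ht) ht (fun e => n_Sn _ (congr1 snd e)) hx
    (leqW (leqnSn t)) (leqnn _).
  by apply/negP; apply: IH (ltnW ht) _.
apply: lef_zero.
- exact: dd_mx.
- exact: cm_mx.
- apply: tr_zero => x; rewrite -hm'; exact: hall.
Qed.

Print Assumptions corollary3p5.
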